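(* Let $k\ge 2$ and $n\ge 1$ be integers and let $1\le M\le kn-1$. Then the probability of selecting an item of highest rank (rank $n$) using the strategy $\mathcal{S}(n,k;M)$ is \[ P_{n,k}(\mathcal{S}(n,k;M))=\sum_{l=1}^{k-1}\frac{\binom Ml(k)_l\,(k(n-1))_{M-l}}{(kn)_M} +k\sum_{j=1}^{n-1}\sum_{l=1}^k \frac{\binom Ml(k)_l\,(k(j-1))_{M-l}}{(kn)_M}\cdot\frac 1{k(n-j+1)-l}. \]
   Context: Fix integers $k\ge2$, $n\ge1$. There are $kn$ items, $k$ items at each of the ranks $1,2,\dots,n$ (rank $n$ is highest). The items are revealed one at a time in a uniformly random order, i.e. the sequence of ranks is a uniformly random permutation of the multiset $\{1^k,2^k,\dots,n^k\}$ (each number in $\{1,\dots,n\}$ repeated $k$ times); $P_{n,k}$ denotes this uniform probability. For $M\in\{1,\dots,kn-1\}$, the strategy $\mathcal{S}(n,k;M)$ lets the first $M$ items pass and then selects the first later-arriving item whose rank is greater than or equal to the highest rank among the first $M$ items (if such an item exists; otherwise nothing is selected). $P_{n,k}(\mathcal{S}(n,k;M))$ denotes the probability that this strategy selects an item of rank $n$. Notation: $(b)_a=b(b-1)\cdots(b-a+1)$ is the falling factorial for nonnegative integers $a,b$, with $(b)_0=1$ (so $(b)_a=0$ if $a>b$). *)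

(* Defs.v *)
From mathcomp Require Import all_boot all_order all_algebra.
Set Implicit Arguments. Unset Strict Implicit. Unset Printing Implicit Defensive.
Import Order.TTheory GRing.Theory Num.Theory.

Definition rank_multiset (n k : nat) : seq nat :=
  flatten [seq nseq k r | r <- iota 1 n].

(* All distinct arrangements of the multiset; the uniform probability P_{n,k}
   is the uniform distribution on this (duplicate-free) list. *)
Definition arrangements (n k : nat) : seq (seq nat) :=
  permutations (rank_multiset n k).

Definition strategy_select (M : nat) (s : seq nat) : option nat :=
  let m := \max_(x <- take M s) x in
  let r := drop M s in
  if has (fun x => m <= x) r then Some (nth 0 r (find (fun x => m <= x) r))
  else None.

Definition success_prob (n k M : nat) : rat :=
  ((count (fun s => strategy_select M s == Some n) (arrangements n k))%:R /
   (size (arrangements n k))%:R)%R.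

(* (b)_a falling factorial = b ^_ a (mathcomp's ffact). *)

(* Main.v *)
Require Import Defs.
From mathcomp Require Import all_boot all_order all_algebra.
From mathcomp Require Import zify ring.
Import Order.TTheory GRing.Theory Num.Theory.
Set Implicit Arguments. Unset Strict Implicit. Unset Printing Implicit Defensive.

Lemma count_rank (P : pred nat) n k :
  count P (rank_multiset n k) = (k * count P (iota 1 n))%N.
Proof.
rewrite /rank_multiset count_flatten -map_comp.
elim: (iota 1 n) => [|r s IH] /=; first by rewrite muln0.
by rewrite IH count_nseq mulnDr mulnC.
Qed.

Lemma iota_lt m n c : count (fun x => x < c) (iota m n) = minn (c - m) n.
Proof.
elim: n m => [|n IH] m /=; first by rewrite minn0.
rewrite IH; case H: (m < c) => /=; lia.
Qed.

Lemma iota_eq m n j : count (pred1 j) (iota m n) = (m <= j < m + n).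
Proof.
elim: n m => [|n IH] m /=; first by rewrite addn0; case: (leqP m j) => //= h; lia.
rewrite IH; case: eqP => [<-|H] /=.
  have -> : (m.+1 <= m) = false by lia.
  have -> : (m <= m < m + n.+1) = true by lia.
  by [].
case: (leqP m.+1 j) => h2; case: (ltnP j (m.+1 + n)) => h3 /=.
- have -> : (m <= j < m + n.+1) = true by lia. by [].
- have -> : (m <= j < m + n.+1) = false by lia. by [].
- have -> : (m <= j < m + n.+1) = false by lia. by [].
- have -> : (m <= j < m + n.+1) = false by lia. by [].
Qed.

Section Counts.
Variables n k j : nat.
Hypotheses (hj1 : (1 <= j)%N) (hjn : (j <= n)%N).
Let u := rank_multiset n k.

Lemma size_rank : size u = (k * n)%N.
Proof. by rewrite -count_predT count_rank count_predT size_iota. Qed.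

Lemma cnt_lt : count (fun x => x < j) u = (k * (j - 1))%N.
Proof. rewrite count_rank iota_lt; congr (_ * _)%N; lia. Qed.

Lemma cnt_eq : count (pred1 j) u = k.
Proof. rewrite count_rank iota_eq; have -> : (1 <= j < 1 + n) by lia. by rewrite muln1. Qed.

Lemma cnt_ge : count (fun x => j <= x) u = (k * (n - j + 1))%N.
Proof.
have := count_predC (fun x => x < j) u.
rewrite size_rank cnt_lt.
have -> : count (predC (fun x => x < j)) u = count (fun x => j <= x) u.
  by apply: eq_count => x /=; rewrite -leqNgt.
move=> H; have : (k * (n - j + 1) + k * (j - 1) = k * n)%N.
  by rewrite -mulnDr; congr (_ * _)%N; lia.
lia.
Qed.

Lemma cnt_gt : count (fun x => j < x) u = (k * (n - j))%N.
Proof.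
have := count_predC (fun x => x < j.+1) u.
rewrite size_rank count_rank iota_lt.
have -> : count (predC (fun x => x < j.+1)) u = count (fun x => j < x) u.
  by apply: eq_count => x /=; rewrite -leqNgt.
move=> H; have : (k * minn (j.+1 - 1) n + k * (n - j) = k * n)%N.
  by rewrite -mulnDr; congr (_ * _)%N; lia.
lia.
Qed.

End Counts.

Lemma mem_rank n k x : (0 < k)%N -> x \in rank_multiset n k -> (1 <= x <= n)%N.
Proof.
move=> hk; rewrite -has_pred1 has_count count_rank iota_eq.
case: (1 <= x < 1 + n)%N / idP => h; last by rewrite muln0.
by move=> _; lia.
Qed.

Definition Np (u : seq nat) := size (permutations u).

Lemma Np_gt0 u : (0 < Np u)%N.
Proof. have : u \in permutations u by rewrite mem_permutations. by rewrite /Np; case: (permutations u). Qed.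

Lemma Np_rec u : (0 < size u)%N -> Np u = \sum_(x <- undup u) Np (rem x u).
Proof.
move=> H; rewrite /Np (perm_size (permutationsE H)) size_allpairs_dep.
by rewrite sumnE big_map.
Qed.

Lemma sum_count_undup (u : seq nat) : \sum_(x <- undup u) count_mem x u = size u.
Proof.
rewrite -(perm_size (perm_count_undup u)) size_flatten /shape sumnE !big_map.
by apply: eq_bigr => x _; rewrite size_nseq.
Qed.

Lemma Mult (S : seq nat) : uniq S -> forall u, {subset u <= S} ->
  Np u * \prod_(y <- S) (count_mem y u)`! = (size u)`!.
Proof.
move=> US u; move Dm: (size u) => m; elim: m u Dm => [|m IH] u Dm sub.
  case: u Dm sub => // _ _; rewrite /Np /= mul1n big1 // => y _.
rewrite Np_rec ?Dm // big_distrl /=.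
have key : forall x, x \in u -> \prod_(y <- S) (count_mem y u)`! =
   count_mem x u * \prod_(y <- S) (count_mem y (rem x u))`!.
  move=> x xu; have xS := sub x xu.
  rewrite (bigD1_seq x xS US) [in RHS](bigD1_seq x xS US) /= mulnA.
  congr (_ * _).
    rewrite count_rem xu /= eqxx.
    have : (0 < count_mem x u)%N by rewrite -has_count has_pred1.
    by case: (count_mem x u) => // c _; rewrite subn1 factS.
  apply: eq_bigr => y /negPf yx; rewrite count_rem /= eq_sym yx andbF subn0 //.
transitivity (\sum_(x <- undup u) count_mem x u * m`!).
  apply: eq_big_seq => x; rewrite mem_undup => xu.
  rewrite (key x xu) mulnCA IH ?size_rem ?Dm //.
  by move=> y /mem_rem; apply: sub.
by rewrite -big_distrl /= sum_count_undup Dm factS mulnC.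
Qed.

Lemma Nrem u x : x \in u -> count_mem x u * Np u = size u * Np (rem x u).
Proof.
move=> xu.
have US := undup_uniq u.
have M1 : Np u * \prod_(y <- undup u) (count_mem y u)`! = (size u)`!.
  by apply: Mult => // y; rewrite mem_undup.
have M2 : Np (rem x u) * \prod_(y <- undup u) (count_mem y (rem x u))`! = (size (rem x u))`!.
  by apply: Mult => // y yu; rewrite mem_undup (mem_rem yu).
set P := \prod_(y <- undup u) (count_mem y (rem x u))`! in M2.
have Pgt0 : (0 < P)%N by apply: prodn_gt0 => y; rewrite fact_gt0.
have key : \prod_(y <- undup u) (count_mem y u)`! = count_mem x u * P.
  have xS : x \in undup u by rewrite mem_undup.
  rewrite /P (bigD1_seq x xS US) [in RHS](bigD1_seq x xS US) /= mulnA.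
  congr (_ * _).
    rewrite count_rem xu /= eqxx.
    have : (0 < count_mem x u)%N by rewrite -has_count has_pred1.
    by case: (count_mem x u) => // c _; rewrite subn1 factS.
  apply: eq_bigr => y /negPf yx; rewrite count_rem /= eq_sym yx andbF subn0 //.
rewrite key in M1.
apply/eqP; rewrite -(eqn_pmul2r Pgt0).
have -> : count_mem x u * Np u * P = Np u * (count_mem x u * P) by ring.
rewrite M1 -mulnA M2.
rewrite size_rem //.
have : (0 < size u)%N by case: (u) xu.
by case: (size u) => // m _; rewrite factS.
Qed.

Local Open Scope ring_scope.

Definition Avg (u : seq nat) (f : seq nat -> rat) : rat :=
  (\sum_(s <- permutations u) f s) / (Np u)%:R.

Lemma Np_neq0 u : (Np u)%:R != 0 :> rat.
Proof. by rewrite pnatr_eq0 -lt0n Np_gt0. Qed.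

Lemma Avg_const u c : Avg u (fun _ => c) = c.
Proof.
rewrite /Avg big_const_seq -/(Np u).
have -> : iter (Np u) (+%R c) 0 = c *+ Np u.
  by elim: (Np u) => //= m ->; rewrite mulrS.
by rewrite -[c *+ _]mulr_natr mulfK // Np_neq0.
Qed.

Lemma eq_Avg u f g : {in permutations u, f =1 g} -> Avg u f = Avg u g.
Proof. by move=> H; rewrite /Avg (eq_big_seq _ H). Qed.

Lemma Avg_sum (I : Type) (r : seq I) u (F : I -> seq nat -> rat) :
  Avg u (fun s => \sum_(i <- r) F i s) = \sum_(i <- r) Avg u (F i).
Proof. by rewrite /Avg exchange_big /= mulr_suml. Qed.

Lemma Avg_scale u c f : Avg u (fun s => c * f s) = c * Avg u f.
Proof. by rewrite /Avg -big_distrr /= mulrA. Qed.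

Lemma sum_undup_count (u : seq nat) (F : nat -> rat) :
  \sum_(x <- undup u) (count_mem x u)%:R * F x = \sum_(x <- u) F x.
Proof.
rewrite -[RHS](perm_big _ (perm_count_undup u)) big_flatten big_map /=.
apply: eq_bigr => x _; rewrite big_nseq.
elim: (count_mem x u) => [|m IH]; first by rewrite mul0r.
by rewrite /= -IH -addn1 natrD mulrDl mul1r addrC.
Qed.

Lemma sum_ind (T : Type) (P : pred T) (s : seq T) :
  \sum_(x <- s) ((P x)%:R : rat) = (count P s)%:R.
Proof.
elim: s => [|x s IH]; first by rewrite big_nil.
by rewrite big_cons IH /= natrD.
Qed.

Lemma Avg_head u f : (0 < size u)%N ->
  Avg u f = \sum_(x <- undup u) ((count_mem x u)%:R / (size u)%:R) *
                                 Avg (rem x u) (fun t => f (x :: t)).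
Proof.
move=> H; rewrite /Avg (perm_big _ (permutationsE H)) big_allpairs_dep /=.
rewrite mulr_suml; apply: eq_big_seq => x; rewrite mem_undup => xu.
have E := Nrem xu.
have E' : (count_mem x u)%:R = (size u)%:R * (Np (rem x u))%:R / (Np u)%:R :> rat.
  by rewrite -natrM -E natrM mulfK // Np_neq0.
rewrite E'.
have : (size u)%:R != 0 :> rat by rewrite pnatr_eq0 -lt0n.
have := Np_neq0 u; have := Np_neq0 (rem x u).
move=> h1 h2 h3; field.
by rewrite h1 h2 h3.
Qed.

Lemma Avg_prefix M : forall u (f : seq nat -> seq nat -> rat) (phi : seq nat -> rat),
  (M <= size u)%N ->
  (forall a v, perm_eq (a ++ v) u -> size a = M -> Avg v (f a) = phi a) ->
  Avg u (fun s => f (take M s) (drop M s)) = Avg u (fun s => phi (take M s)).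
Proof.
elim: M => [|M IH] u f phi Hs Hp.
  transitivity (Avg u (f [::])); first by apply: eq_Avg => s _; rewrite take0 drop0.
  rewrite (Hp [::] u) // -(Avg_const u (phi [::])).
  by apply: eq_Avg => s _; rewrite take0.
have Hu : (0 < size u)%N by case: (size u) Hs.
rewrite !(Avg_head _ Hu); apply: eq_big_seq => x; rewrite mem_undup => xu.
congr (_ * _) => /=.
apply: (IH (rem x u) (fun a => f (x :: a)) (fun a => phi (x :: a))).
  by rewrite size_rem //; case: (size u) Hs.
move=> a v Hav Ha; apply: Hp; last by rewrite /= Ha.
rewrite -(perm_cons x) in Hav; apply: (perm_trans Hav).
by rewrite perm_sym perm_to_rem.
Qed.

Lemma Avg_nil f : Avg [::] f = f [::].
Proof. by rewrite /Avg /Np /= big_seq1 divr1. Qed.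

Lemma Avg_first (S T : pred nat) v :
  Avg v (fun s => (has S s && T (nth 0%N s (find S s)))%:R) =
  (count (fun x => S x && T x) v)%:R / (count S v)%:R.
Proof.
move Dm: (size v) => m; elim: m v Dm => [|m IH] v Dm.
  by case: v Dm => // _; rewrite Avg_nil /= mul0r.
set CST := count _ v; set CS := count S v.
have Hv : (0 < size v)%N by rewrite Dm.
rewrite (Avg_head _ Hv).
pose g x := if S x then ((T x)%:R : rat) else CST%:R / CS%:R.
transitivity (\sum_(x <- undup v) (count_mem x v)%:R * (g x / (size v)%:R)).
  apply: eq_big_seq => x; rewrite mem_undup => xv.
  rewrite mulrA [_ / _ * _]mulrAC; congr (_ * _ * _).
  rewrite /g; case Sx: (S x).
    by rewrite -(Avg_const (rem x v) (T x)%:R); apply: eq_Avg => t _ /=; rewrite Sx.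
  transitivity (Avg (rem x v) (fun t => (has S t && T (nth 0%N t (find S t)))%:R)).
    by apply: eq_Avg => t _ /=; rewrite Sx.
  rewrite IH; last by rewrite size_rem // Dm.
  by rewrite /CST /CS !count_rem xv /= Sx !subn0.
rewrite sum_undup_count -big_distrl /= /g.
have -> : \sum_(x <- v) (if S x then ((T x)%:R : rat) else CST%:R / CS%:R) =
          \sum_(x <- v) ((S x && T x)%:R + (~~ S x)%:R * (CST%:R / CS%:R)).
  by apply: eq_bigr => x _; case: (S x); rewrite /= ?mul0r ?mul1r ?addr0 ?add0r.
rewrite big_split /= sum_ind -big_distrl /= sum_ind -/CST.
have Hc : (count (predC S) v + CS)%N = size v by rewrite addnC count_predC.
have -> : count (fun x => ~~ S x) v = count (predC S) v by [].
rewrite -Hc.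
have hSz : (count (predC S) v + CS)%N != 0%N by rewrite Hc -lt0n.
case: (posnP CS) => [CS0|CSp].
  have : (CST <= CS)%N by apply: sub_count => x /andP[].
  by rewrite CS0 leqn0 => /eqP ->; rewrite !mul0r !mulr0 add0r mul0r.
have h1 : CS%:R != 0 :> rat by rewrite pnatr_eq0 -lt0n.
have h2 : (count (predC S) v + CS)%:R != 0 :> rat by rewrite pnatr_eq0.
rewrite natrD in h2 *; field; by rewrite h1 h2.
Qed.

Lemma hyper_id M l a b :
  (a * (if l is l'.+1 then 'C(M, l') * (a - 1) ^_ l' * b ^_ (M - l') else 0) +
   b * ('C(M, l) * a ^_ l * (b - 1) ^_ (M - l)) =
   'C(M.+1, l) * a ^_ l * b ^_ (M.+1 - l))%N.
Proof.
case: l => [|l].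
  by rewrite !bin0 !ffactn0 !subn0 muln0 add0n ffactnS subn1 !mul1n.
rewrite binS subSS ffactnS subn1.
case: (ltnP l M) => hl.
  have -> : (M - l = (M - l.+1).+1)%N by lia.
  rewrite ffactnS -!subn1.
  move: ('C(M, l)) ('C(M, l.+1)) ((a - 1) ^_ l) ((b - 1) ^_ (M - l.+1)) => c1 c2 x y; ring.
rewrite (@bin_small M l.+1) ?ltnS // -?subn1.
move: ('C(M, l)) ((a - 1) ^_ l) ((b - 1) ^_ (M - l.+1)) (b ^_ (M - l)) => c1 x y z; ring.
Qed.

Lemma Avg_hyper M : forall u (pA pC : pred nat) l,
  (forall x, pA x -> ~~ pC x) -> (M <= size u)%N ->
  Avg u (fun s => ((count pA (take M s) == l) && (count pC (take M s) == 0%N))%:R) =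
  ('C(M, l) * (count pA u) ^_ l * (count (fun x => ~~ pA x && ~~ pC x) u) ^_ (M - l))%:R
     / ((size u) ^_ M)%:R.
Proof.
elim: M => [|M IH] u pA pC l hd Hs.
  transitivity (Avg u (fun _ => ((0%N == l))%:R)).
    by apply: eq_Avg => s _; rewrite take0 /= andbT.
  by rewrite Avg_const; case: l => [|l]; rewrite ?bin0 ?bin0n /= ?mul0n ?mul0r ?divr1.
have Hu : (0 < size u)%N by case: (size u) Hs.
set pB := (fun x => ~~ pA x && ~~ pC x).
set a := count pA u; set b := count pB u; set m := size u.
pose D : rat := ((m.-1) ^_ M)%:R.
pose X : rat := (if l is l'.+1 then 'C(M, l') * (a - 1) ^_ l' * b ^_ (M - l') else 0)%N%:R / D.
pose Y : rat := ('C(M, l) * a ^_ l * (b - 1) ^_ (M - l))%N%:R / D.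
rewrite (Avg_head _ Hu).
transitivity (\sum_(x <- undup u) (count_mem x u)%:R * (((pA x)%:R * X + (pB x)%:R * Y) / m%:R)).
  apply: eq_big_seq => x; rewrite mem_undup => xu.
  rewrite mulrA [_ / _ * _]mulrAC; congr (_ * _ * _).
  transitivity (Avg (rem x u) (fun t => (((pA x + count pA (take M t))%N == l) &&
                                          ((pC x + count pC (take M t))%N == 0%N))%:R)).
    by apply: eq_Avg => t _.
  have Hr : (M <= size (rem x u))%N by rewrite size_rem //; case: (size u) Hs.
  have szr : size (rem x u) = m.-1 by rewrite size_rem.
  rewrite /pB; case hA: (pA x).
    have hC : pC x = false by apply/negbTE/hd.
    rewrite hC /= mul1r mul0r addr0 /X.
    case: l {X Y} => [|l].
      rewrite mul0r -(Avg_const (rem x u) 0); apply: eq_Avg => t _.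
      by rewrite add1n.
    transitivity (Avg (rem x u) (fun t => ((count pA (take M t) == l) &&
                                          (count pC (take M t) == 0%N))%:R)).
      by apply: eq_Avg => t _; rewrite add1n eqSS.
    rewrite IH // szr /D /a /b !count_rem xu hA /=.
    by rewrite subn0.
  case hC: (pC x) => /=.
    rewrite mul0r add0r mul0r -(Avg_const (rem x u) 0); apply: eq_Avg => t _.
    by rewrite add1n andbF.
  rewrite mul0r add0r mul1r /Y IH // szr /D /a /b !count_rem xu hA hC /= subn0.
  by [].
rewrite sum_undup_count -big_distrl /= big_split /= -!big_distrl /= !sum_ind -/a -/b.
have hm : m%:R != 0 :> rat by rewrite pnatr_eq0 -lt0n.
have hD : D != 0 by rewrite /D pnatr_eq0 -lt0n ffact_gt0; move: Hs; rewrite /m; case: (size u).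
rewrite ffactnS -hyper_id natrD !natrM /X /Y.
rewrite -/m -/D; field; by rewrite hm hD.
Qed.

Lemma sum_pick m p i0 (F : nat -> rat) : (m <= i0 < p)%N ->
  \sum_(m <= i < p) (i == i0)%:R * F i = F i0.
Proof.
move=> h; rewrite (bigD1_seq i0) ?mem_index_iota ?iota_uniq //= eqxx mul1r.
by rewrite big1_seq ?addr0 // => i /andP[/negPf -> _]; rewrite mul0r.
Qed.

Lemma max_mem (a : seq nat) : a != [::] -> \max_(y <- a) y \in a.
Proof.
elim: a => // x a IH _; rewrite big_cons inE.
case: a IH => [|y a'] IH; first by rewrite big_nil maxn0 eqxx.
rewrite /maxn; case: ltnP => _; first by rewrite IH // orbT.
by rewrite eqxx.
Qed.

Definition wgt n k j l : rat :=
  (k - (if j == n then l else 0))%N%:R / (k * (n - j + 1) - l)%N%:R.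

Definition phiA n k (a : seq nat) : rat :=
  let j := \max_(y <- a) y in
  (count (fun x => (j <= x)%N && (x == n)) (rank_multiset n k) -
   count (fun x => (j <= x)%N && (x == n)) a)%N%:R /
  (count (fun x => (j <= x)%N) (rank_multiset n k) - count (fun x => (j <= x)%N) a)%N%:R.

Lemma PW n k a : a != [::] -> (forall x, x \in a -> (1 <= x <= n)%N) ->
  (forall r, count (pred1 r) a <= k)%N ->
  phiA n k a = \sum_(1 <= j < n.+1) \sum_(1 <= l < k.+1)
     wgt n k j l * ((count (pred1 j) a == l) && (count (fun x => (j < x)%N) a == 0%N))%:R.
Proof.
move=> an0 Hmem Hk.
set j0 := \max_(y <- a) y; set l0 := count (pred1 j0) a.
have j0a : j0 \in a by apply: max_mem.
have le0 : forall x, x \in a -> (x <= j0)%N by move=> x xa; exact: leq_bigmax_seq.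
have hj0 := Hmem j0 j0a.
have l0pos : (0 < l0)%N by rewrite /l0 -has_count has_pred1.
have l0k : (l0 <= k)%N by apply: Hk.
have ind : forall j l, (0 < l)%N ->
    ((count (pred1 j) a == l) && (count (fun x => (j < x)%N) a == 0%N)) = (j == j0) && (l == l0).
  move=> j l lpos; case: (eqVneq j j0) => [->|ne] /=.
    have -> : count (fun x => (j0 < x)%N) a = 0%N.
      by rewrite (eq_in_count (a2 := pred0)) ?count_pred0 // => x xa /=; rewrite ltnNge le0.
    by rewrite andbT eq_sym.
  apply/negbTE/negP => /andP [/eqP hc /eqP hg].
  case: (ltngtP j j0) => hjj.
  - have : has (fun x => (j < x)%N) a by apply/hasP; exists j0.
    by rewrite has_count hg.
  - move: hc; rewrite (eq_in_count (a2 := pred0)) ?count_pred0.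
      by move=> h; rewrite -h in lpos.
    move=> x xa /=; apply/negbTE; rewrite neq_ltn.
    by rewrite (leq_ltn_trans (le0 x xa) hjj).
  - by rewrite hjj eqxx in ne.
rewrite (eq_big_nat _ _ (F2 := fun j => (j == j0)%:R *
            \sum_(1 <= l < k.+1) (l == l0)%:R * wgt n k j l)); last first.
  move=> j _; rewrite big_distrr; apply: eq_big_nat => l /andP[hl _]; rewrite ind //.
  by case: (j == j0); case: (l == l0); rewrite /= ?mul1r ?mulr1 ?mul0r ?mulr0.
rewrite sum_pick; last by lia.
rewrite sum_pick; last by lia.
have hjn : (j0 <= n)%N by case/andP: hj0.
have hj1 : (1 <= j0)%N by case/andP: hj0.
rewrite /phiA -/j0 /wgt.
have -> : count (fun x => (j0 <= x)%N && (x == n)) (rank_multiset n k) = k.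
  rewrite (eq_count (a2 := pred1 n)); first by apply: cnt_eq; lia.
  by move=> x /=; case: eqP => [->|]; rewrite ?andbF ?andbT.
have -> : count (fun x => (j0 <= x)%N && (x == n)) a = if j0 == n then l0 else 0%N.
  case: (eqVneq j0 n) => [e|ne].
    rewrite /l0 e; apply: eq_count => x /=.
    by case: eqP => [->|]; rewrite ?andbF ?leqnn.
  rewrite (eq_in_count (a2 := pred0)) ?count_pred0 // => x xa /=.
  apply/negbTE; rewrite negb_and; apply/orP; right.
  have := le0 x xa; apply: contraL => /eqP ->.
  by rewrite -ltnNge ltn_neqAle ne hjn.
rewrite cnt_ge //.
have -> : count (fun x => (j0 <= x)%N) a = l0.
  apply: eq_in_count => x xa /=.
  by rewrite eqn_leq le0.
by [].
Qed.

Theorem proposition1 (n k M : nat) :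
  (2 <= k)%N -> (1 <= n)%N -> (1 <= M)%N -> (M <= k * n - 1)%N ->
  success_prob n k M =
    \sum_(1 <= l < k)
      (('C(M, l) * k ^_ l * (k * (n - 1)) ^_ (M - l))%N%:R / ((k * n) ^_ M)%N%:R)
  + k%:R * \sum_(1 <= j < n) \sum_(1 <= l < k.+1)
      (('C(M, l) * k ^_ l * (k * (j - 1)) ^_ (M - l))%N%:R / ((k * n) ^_ M)%N%:R
       * ((k * (n - j + 1))%N%:R - l%:R)^-1).
Proof.
move=> hk hn hM1 hM2.
have hk0 : (0 < k)%N by lia.
set u := rank_multiset n k.
have szu : size u = (k * n)%N by apply: size_rank.
have HMu : (M <= size u)%N by rewrite szu; lia.
pose mx (a : seq nat) := \max_(y <- a) y.
pose f (a b : seq nat) : rat :=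
  (has (fun x => (mx a <= x)%N) b && (nth 0%N b (find (fun x => (mx a <= x)%N) b) == n))%:R.
have E1 : success_prob n k M = Avg u (fun s => f (take M s) (drop M s)).
  rewrite /success_prob /Avg /Np /arrangements -/u -sum_ind; congr (_ / _).
  apply: eq_bigr => s _; rewrite /strategy_select /f /mx.
  by case: has.
rewrite E1 (Avg_prefix (phi := phiA n k)) //; last first.
  move=> a v Hav _; rewrite /f (@Avg_first (fun x => (mx a <= x)%N) (pred1 n)) /phiA.
  have cP : forall P : pred nat, count P v = (count P u - count P a)%N.
    by move=> P; rewrite -(permP Hav) count_cat addKn.
  by rewrite !cP.
rewrite (eq_Avg (g := fun s => \sum_(1 <= j < n.+1) \sum_(1 <= l < k.+1) wgt n k j l *
   ((count (pred1 j) (take M s) == l) && (count (fun x => (j < x)%N) (take M s) == 0%N))%:R));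
  last first.
  move=> s; rewrite mem_permutations => Hs.
  have szs : size s = size u by apply: perm_size.
  apply: PW.
  - by rewrite -size_eq0 size_takel ?szs // -lt0n.
  - move=> x xt; apply: (mem_rank (k := k)) => //.
    by rewrite -(perm_mem Hs); apply: mem_take xt.
  - move=> r; apply: (@leq_trans (count (pred1 r) s)).
      by rewrite -{2}(cat_take_drop M s) count_cat leq_addr.
    rewrite (permP Hs) /u count_rank iota_eq.
    by case: (_ && _); rewrite ?muln1 ?muln0.
rewrite Avg_sum.
pose T j l : rat := ('C(M, l) * k ^_ l * (k * (j - 1)) ^_ (M - l))%N%:R / ((k * n) ^_ M)%N%:R.
transitivity (\sum_(1 <= j < n.+1) \sum_(1 <= l < k.+1) wgt n k j l * T j l).
  apply: eq_big_nat => j hj; rewrite Avg_sum; apply: eq_bigr => l _.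
  rewrite Avg_scale Avg_hyper //; last by move=> x /eqP ->; rewrite ltnn.
  rewrite cnt_eq; [|lia|lia].
  rewrite (eq_count (a2 := fun x => (x < j)%N)); last first.
    by move=> x /=; rewrite -leqNgt ltn_neqAle.
  by rewrite cnt_lt ?szu //; lia.
rewrite big_nat_recr //= addrC; congr (_ + _).
  rewrite big_nat_recr /=; last by lia.
  rewrite {2}/wgt eqxx subnn mul0r mul0r addr0.
  apply: eq_big_nat => l /andP[hl1 hl2].
  rewrite /wgt eqxx subnn add0n muln1 divff ?mul1r //.
  by rewrite pnatr_eq0 subn_eq0 -ltnNge.
rewrite big_distrr; apply: eq_big_nat => j /andP[hj1 hj2].
rewrite big_distrr; apply: eq_big_nat => l /andP[hl1 hl2].
have hjn : (j == n) = false by apply/negbTE; rewrite neq_ltn hj2.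
rewrite /wgt hjn subn0 natrB; last first.
  by apply: (@leq_trans k); [lia | apply: leq_pmulr; lia].
rewrite /T /=.
by rewrite [LHS]mulrAC -[LHS]mulrA.
Qed.
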